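(* $$\pi_{q^m}(\mathrm{MA}_n(\mathbb{F}_q))= \{ \sigma\in \mathrm{Maps}(\mathbb{F}_{q^m}^n,\mathbb{F}_{q^m}^n)~|~ \sigma\phi=\phi\sigma ~\forall~ \phi\in \mathrm{Gal}(\mathbb{F}_{q^m}:\mathbb{F}_q)\}.$$
   Context: $\mathrm{MA}_n(\mathbb{F}_q)$ denotes the set of polynomial maps $F=(F_1,\dots,F_n)$ with $F_i\in\mathbb{F}_q[X_1,\dots,X_n]$, and $\pi_{q^m}(F)$ is the induced map $\mathbb{F}_{q^m}^n\to\mathbb{F}_{q^m}^n$. The Galois group acts on $\mathbb{F}_{q^m}^n$ coordinatewise. *)

(* Defs.v *)
From HB Require Import structures.
From mathcomp Require Import all_boot all_order all_algebra all_field.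
From mathcomp Require Import mpoly.
Set Implicit Arguments. Unset Strict Implicit. Unset Printing Implicit Defensive.
Import GRing.Theory.
Local Open Scope ring_scope.

(* MA_n(F): polynomial maps F = (F_1,...,F_n), F_i in F[X_1..X_n]. *)
Definition polymap (F : finFieldType) (n : nat) := 'I_n -> {mpoly F[n]}.

(* pi_L(P): the induced map L^n -> L^n, for an extension L of F. *)
Definition induced_map (F : finFieldType) (L : fieldExtType F) (n : nat)
    (P : polymap F n) (x : 'I_n -> L) : 'I_n -> L :=
  fun i => (map_mpoly (in_alg L) (P i)).@[x].

Definition is_gal (F : finFieldType) (L : fieldExtType F) (phi : L -> L) : Prop :=
  [/\ bijective phi,
      (forall a b : L, phi (a + b) = phi a + phi b),
      (forall a b : L, phi (a * b) = phi a * phi b),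
      phi 1 = 1 &
      (forall c : F, phi (c%:A) = c%:A)].

Definition gal_act (L : Type) (n : nat) (phi : L -> L) (x : 'I_n -> L) : 'I_n -> L :=
  fun i => phi (x i).

(* Main.v *)
Require Import Defs.
From HB Require Import structures.
From mathcomp Require Import all_boot all_order all_algebra all_field.
From mathcomp Require Import mpoly.
From Stdlib Require Import FunctionalExtensionality.
Set Implicit Arguments. Unset Strict Implicit. Unset Printing Implicit Defensive.
Import GRing.Theory.
Local Open Scope ring_scope.

Lemma mk_rmorph (R : ringType) (f : R -> R) :
  (forall a b, f (a + b) = f a + f b) ->
  (forall a b, f (a * b) = f a * f b) -> f 1 = 1 ->
  {g : {rmorphism R -> R} | f =1 g}.
Proof.
move=> fD fM f1.
have f0 : f 0 = 0 by apply: (@addrI _ (f 0)); rewrite -fD !addr0.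
have fA : zmod_morphism f.
  move=> x y; have: f (x - y) + f y = f x by rewrite -fD subrK.
  by move=> <-; rewrite addrK.
have fMM : monoid_morphism f by split.
pose faM := GRing.isZmodMorphism.Build _ _ f fA.
pose fmM := GRing.isMonoidMorphism.Build _ _ f fMM.
pose g : {rmorphism R -> R} := HB.pack f faM fmM.
by exists g.
Qed.

Section S.
Variables (F : finFieldType) (L : fieldExtType F).
Local Notation fL := (FinFieldExtType L).

Lemma pow_card (x : L) : x ^+ #|fL| = x.
Proof. exact: (@expf_card fL x). Qed.

Lemma frobD (x y : L) : (x + y) ^+ #|F| = x ^+ #|F| + y ^+ #|F|.
Proof.
have [p _ pcharFp] := finPcharP F; rewrite (card_pprimeChar pcharFp).
elim: (logn _ _) x y => [|k IHk] x y; first by rewrite !expr1.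
rewrite expnSr !exprM IHk.
by rewrite -(pchar_lalg L) in pcharFp; rewrite -!(pFrobenius_autE pcharFp) rmorphD.
Qed.

Lemma fixed_F (a : L) : a ^+ #|F| = a -> exists c : F, a = c%:A.
Proof.
move=> h; have : a \in (1%VS : {vspace L}).
  by rewrite Fermat's_little_theorem dimv1 expn1 h.
by case/vlineP=> c ->; exists c.
Qed.

Lemma frob_rm : {g : {rmorphism L -> L} | forall x, g x = x ^+ #|F|}.
Proof.
have [g Hg] := @mk_rmorph L (fun x => x ^+ #|F|) (@frobD) (fun a b => exprMn_comm _ (mulrC a b)) (expr1n _ _).
by exists g => x; rewrite -Hg.
Qed.

Lemma delta (y : L) : 1 - y ^+ (#|fL|.-1) = (y == 0)%:R.
Proof.
have gt1 : (1 < #|fL|)%N := finNzRing_gt1 fL.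
have [->|nz] := eqVneq y 0; first by rewrite expr0n -(subnKC gt1) /= subr0.
rewrite /= ; apply/eqP; rewrite subr_eq0; apply/eqP/(mulfI nz); rewrite mulr1 -exprS prednK ?pow_card //.
by apply: ltnW.
Qed.


Variable n : nat.

Definition interp (s : ('I_n -> L) -> L) : {mpoly L[n]} :=
  \sum_(a : {ffun 'I_n -> fL})
     (s (fun i => a i : L))%:MP * \prod_(i < n) (1 - ('X_i - (a i : L)%:MP) ^+ (#|fL|.-1)).

Lemma interp_eval s x : (interp s).@[x] = s x.
Proof.
rewrite /interp raddf_sum /=.
rewrite (bigD1 ([ffun i => x i] : {ffun 'I_n -> fL})) //= [X in _ + X]big1 ?addr0.
  rewrite rmorphM /= mevalC rmorph_prod /= big1 ?mulr1.
    by congr s; apply: functional_extensionality => i; rewrite ffunE.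
  move=> i _; rewrite rmorphB /= meval1 rmorphXn /= rmorphB /= mevalXU mevalC.
  by rewrite ffunE subrr delta eqxx.
move=> a ne; rewrite rmorphM /= rmorph_prod /=.
have [i hi] : exists i, x i != a i.
  apply/existsP; apply: contraR ne; rewrite negb_exists => /forallP h.
  by apply/eqP/ffunP => i; rewrite ffunE; have := h i; rewrite negbK => /eqP.
rewrite (bigD1 i) //= rmorphB /= meval1 rmorphXn /= rmorphB /= mevalXU !mevalC.
by rewrite delta subr_eq0 (negbTE hi) mul0r mulr0.
Qed.

Lemma interp_map (g : {rmorphism L -> L}) s :
  (forall a, g (s a) = s (fun i => g (a i))) -> map_mpoly g (interp s) = interp s.
Proof.
move=> hs; rewrite /interp rmorph_sum /=.
pose h (a : {ffun 'I_n -> fL}) : {ffun 'I_n -> fL} := [ffun i => g (a i)].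
have hinj : injective h.
  move=> a b /ffunP e; apply/ffunP => i; have := e i; rewrite !ffunE.
  exact: fmorph_inj.
rewrite [RHS](reindex_inj hinj) /=; apply: eq_bigr => a _.
rewrite rmorphM /= map_mpolyC rmorph_prod /=; congr (_ * _).
  congr (_%:MP); etransitivity; first exact: hs.
  by congr s; apply: functional_extensionality => i; rewrite ffunE.
apply: eq_bigr => i _; rewrite rmorphB rmorph1 rmorphXn rmorphB /= map_mpolyC.
by rewrite map_mpolyX ffunE.
Qed.

Lemma eval_morph (g : {rmorphism L -> L}) (p : {mpoly L[n]}) x :
  (forall m, g p@_m = p@_m) -> g (p.@[x]) = p.@[fun i => g (x i)].
Proof.
move=> hc; rewrite !mevalE rmorph_sum; apply: eq_bigr => m _.
rewrite rmorphM rmorph_prod hc; congr (_ * _).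
by apply: eq_bigr => i _; rewrite rmorphXn.
Qed.

Lemma frob_gal (g : {rmorphism L -> L}) : (forall x, g x = x ^+ #|F|) -> is_gal g.
Proof.
move=> hg; split.
- have inj : injective (g : fL -> fL) by apply: fmorph_inj.
  exact: (injF_bij inj).
- exact: rmorphD.
- exact: rmorphM.
- exact: rmorph1.
- by move=> c; rewrite hg -in_algE -rmorphXn expf_card.
Qed.

End S.

Theorem mainTheorem6 (F : finFieldType) (L : fieldExtType F) (n : nat)
    (sigma : ('I_n -> L) -> ('I_n -> L)) :
  (exists P : polymap F n, forall x i, sigma x i = @induced_map F L n P x i) <->
  (forall phi : L -> L, @is_gal F L phi ->
     forall x i, sigma (gal_act phi x) i = gal_act phi (sigma x) i).
Proof.
split.
  move=> [P hP] phi [_ pD pM p1 pc] x i.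
  have [g hg] := mk_rmorph pD pM p1.
  rewrite /gal_act !hP /induced_map hg eval_morph.
    by congr meval; apply: functional_extensionality => j; rewrite hg.
  by move=> m; rewrite mcoeff_map_mpoly /= -hg pc.
move=> H.
have [g hg] := frob_rm L.
have gg := frob_gal hg.
pose s j (x : 'I_n -> L) := sigma x j.
have hmap j : map_mpoly g (interp (s j)) = interp (s j).
  apply: interp_map => a; rewrite /s.
  by have := H g gg a j; rewrite /gal_act => ->.
pose pre (a : L) : F := odflt 0 [pick c : F | c%:A == a].
have preK j m : ((pre (interp (s j))@_m)%:A : L) = (interp (s j))@_m.
  have [c hc] : exists c : F, (interp (s j))@_m = c%:A.
    apply: fixed_F; rewrite -hg -mcoeff_map_mpoly hmap //.
  rewrite /pre; case: pickP => [d /eqP -> //|/(_ c)].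
  by rewrite hc eqxx.
exists (fun j => \sum_(m <- msupp (interp (s j))) pre (interp (s j))@_m *: 'X_[m]).
move=> x j; rewrite /induced_map.
suff -> : map_mpoly (in_alg L) (\sum_(m <- msupp (interp (s j))) pre (interp (s j))@_m *: 'X_[m]) = interp (s j).
  by rewrite interp_eval.
rewrite raddf_sum /= [RHS]mpolyE; apply: eq_bigr => m _.
by rewrite map_mpolyZ map_mpolyX; congr (_ *: _); exact: preK.
Qed.
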